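(* Let $M$ be a closed oriented triangulated $3$-manifold, with $N_0$ vertices and $N_1$ edges, in which every tetrahedron has four distinct vertices, and let generic coordinates $(x_A,y_A,z_A)\in\mathbb R^3$ be assigned to its vertices. Consider the sequence of linear maps $$0\longrightarrow \mathfrak e(3)\xrightarrow{f_1}(dx)\xrightarrow{f_2}(dl)\xrightarrow{f_3}(d\omega)\xrightarrow{f_4}(dx^* )\xrightarrow{f_5}\mathfrak e(3)^*\longrightarrow 0,$$ with $f_4=-f_2^{\mathrm T}$ and $f_5=f_1^{\mathrm T}$. Then this sequence is an algebraic complex: the composition of any two successive maps is zero.
   Context: Triangulations need not be combinatorial: a simplex may appear several times in the boundary of a higher simplex, and several simplices may share the same vertices; only the four vertices of each tetrahedron are required to be distinct. The coordinates are in general position with respect to all algebraic constructions below; in particular no oriented volume vanishes. The length of edge $AB$ is $l_{AB}=\sqrt{(x_B-x_A)^2+(y_B-y_A)^2+(z_B-z_A)^2}$. Each tetrahedron is written $ABCD$ with its vertices in an order giving its positive orientation (induced by the orientation of $M$), and its oriented volume is $V_{ABCD}=\frac16\det(\overrightarrow{AB},\overrightarrow{AC},\overrightarrow{AD})$, which may be of either sign. The inner dihedral angles of the Euclidean tetrahedron are taken with the sign of its volume, and are regarded as functions of the six edge lengths. For an edge $i$, the deficit angle is $\omega_i=-\sum_k\varphi_i^{(k)} \bmod 2\pi$, where the sum runs over the tetrahedra around $i$ and $\varphi_i^{(k)}$ is the signed dihedral angle of the $k$-th tetrahedron at $i$; here all edge lengths are allowed to vary independently (when lengths come from coordinates, $\omega_i\equiv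 0$). The spaces are spaces of column vectors: $\mathfrak e(3)$ is the $6$-dimensional Lie algebra of infinitesimal motions of $\mathbb R^3$ (basis: three translations and three rotations); $(dx)$ and $(dx^* )$ have dimension $3N_0$ with coordinates indexed by $(dx_A,dy_A,dz_A)$ over vertices $A$; $(dl)$ and $(d\omega)$ have dimension $N_1$ indexed by edges. The map $f_1$ sends an infinitesimal motion to the induced infinitesimal displacements of the vertex points $(x_A,y_A,z_A)$; $f_2$ is the Jacobian matrix of the edge lengths with respect to vertex coordinates; $f_3=(\partial\omega_i/\partial l_j)$, evaluated at the lengths coming from the coordinates. (The matrix $f_3$ is known to be symmetric.) *)

(* Defs.v *)
From HB Require Import structures.
From mathcomp Require Import all_boot all_order all_algebra all_fingroup.
From mathcomp Require Import all_classical all_reals all_analysis.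

Set Implicit Arguments.
Unset Strict Implicit.
Unset Printing Implicit Defensive.
Import Order.TTheory GRing.Theory Num.Theory.
Local Open Scope ring_scope.

(* Triangulations (Delta-complexes) obtained by gluing tetrahedra.          *)
(* Tetrahedron t has ordered vertices tv t 0..3 (order = positive           *)
(* orientation), edge-slot {a,b} carries the edge te t a b, face i is the   *)
(* face opposite vertex i; it is glued to face (glue_p t i i) of tetrahedron *)
(* glue_t t i, the vertex j of t going to vertex (glue_p t i j).            *)
Record triangulation (V E T : finType) := Triangulation {
  tv : T -> 'I_4 -> V;
  te : T -> 'I_4 -> 'I_4 -> E;
  ends : E -> V * V;
  glue_t : T -> 'I_4 -> T;
  glue_p : T -> 'I_4 -> {perm 'I_4}
}.

Section Comb.
Variables (V E T : finType) (K : triangulation V E T).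

(* corner (t,a) is glued to corner (s,b) across a face containing vertex a *)
Definition corner_rel : rel (T * 'I_4) := fun ta sb =>
  [exists i : 'I_4, [&& i != ta.2, glue_t K ta.1 i == sb.1 &
                        glue_p K ta.1 i ta.2 == sb.2]].

(* oriented edge-slot (t,a,b) glued to (s,c,d) across a face containing a,b *)
Definition edge_rel : rel (T * 'I_4 * 'I_4) := fun tab scd =>
  [exists i : 'I_4, [&& i != tab.1.2, i != tab.2, glue_t K tab.1.1 i == scd.1.1,
                        glue_p K tab.1.1 i tab.1.2 == scd.1.2 &
                        glue_p K tab.1.1 i tab.2 == scd.2]].

(* number of corners of tetrahedra at vertex v (= triangles of the link) *)
Definition n_corners (v : V) : nat := #|[set ta : T * 'I_4 | tv K ta.1 ta.2 == v]|.
(* number of edges incident to v (= vertices of the link) *)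
Definition n_edges_at (v : V) : nat :=
  #|[set e : E | ((ends K e).1 == v) || ((ends K e).2 == v)]|.

Definition closed_oriented_3manifold : Prop :=
  [/\
      (forall t, injective (tv K t)),
      (forall t a b, te K t a b = te K t b a),
      (forall t a b, a != b ->
         ends K (te K t a b) = (tv K t a, tv K t b) \/
         ends K (te K t a b) = (tv K t b, tv K t a)),
      (* face pairings: involutive, fixed-point free, compatible with the *)
      (* vertex and edge labels, and orientation reversing (coherent      *)
      (* orientation of all tetrahedra)                                   *)
      (forall t i, let s := glue_t K t i in let p := glue_p K t i in
         [/\ glue_t K s (p i) = t /\ glue_p K s (p i) = (p^-1)%g,
             (s, p i) != (t, i),
             (forall j, j != i -> tv K s (p j) = tv K t j),
             (forall j k, j != i -> k != i -> te K s (p j) (p k) = te K t j k)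
           & odd_perm p]) &
      (* vertices and edges are exactly the classes of the gluing *)
      [/\ (forall v, exists t a, tv K t a = v),
          (forall e, exists t a b, a != b /\ te K t a b = e),
          (forall t a s b, tv K t a = tv K s b -> connect corner_rel (t, a) (s, b)),
          (forall t a b s c d, a != b -> c != d -> te K t a b = te K s c d ->
              connect edge_rel (t, a, b) (s, c, d) \/
              connect edge_rel (t, a, b) (s, d, c)) &
          (* manifold condition: each vertex link (a connected closed      *)
          (* surface by the above) has Euler characteristic 2, i.e. is a   *)
          (* 2-sphere: chi = n_edges_at v - n_corners v / 2 = 2            *)
          (forall v, (n_corners v + 4 = 2 * n_edges_at v)%N)]].

End Comb.

Section Geom.
Variables (R : realType) (V E T : finType) (K : triangulation V E T).

Definition coords := V -> 'I_3 -> R.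

Definition edge_len (x : coords) (e : E) : R :=
  Num.sqrt (\sum_(c < 3) (x (ends K e).2 c - x (ends K e).1 c) ^+ 2).

Definition tet_vol (x : coords) (t : T) : R :=
  \det (\matrix_(r < 3, c < 3) (x (tv K t (lift ord0 r)) c - x (tv K t ord0) c)) / 6.

(* Euclidean inner dihedral angle at edge ab of a tetrahedron abcd, as a  *)
(* function of its edge lengths L (via the Gram matrix of ab, ac, ad)      *)
Definition dihedral (L : 'I_4 -> 'I_4 -> R) (a b c d : 'I_4) : R :=
  let guu := L a b ^+ 2 in
  let gvv := L a c ^+ 2 in
  let gww := L a d ^+ 2 in
  let guv := (L a b ^+ 2 + L a c ^+ 2 - L b c ^+ 2) / 2 in
  let guw := (L a b ^+ 2 + L a d ^+ 2 - L b d ^+ 2) / 2 in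
  let gvw := (L a c ^+ 2 + L a d ^+ 2 - L c d ^+ 2) / 2 in
  acos ((guu * gvw - guv * guw) /
        Num.sqrt ((guu * gvv - guv ^+ 2) * (guu * gww - guw ^+ 2))).

Definition signed_dihedral (x : coords) (l : E -> R) (t : T) (a b c d : 'I_4) : R :=
  Num.sg (tet_vol x t) * dihedral (fun p q => l (te K t p q)) a b c d.

(* -(sum of signed dihedral angles around edge i); the deficit angle is   *)
(* this quantity mod 2 pi, which has the same derivatives                 *)
Definition deficit_lift (x : coords) (l : E -> R) (i : E) : R :=
  - \sum_(t : T) \sum_(a : 'I_4) \sum_(b : 'I_4) \sum_(c : 'I_4) \sum_(d : 'I_4)
      (if [&& (a < b)%N, (c < d)%N, [&& a != c, a != d, b != c & b != d]
            & te K t a b == i]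
       then signed_dihedral x l t a b c d else 0).

(* index types: e(3) (3 translations, 3 rotations) and (dx) = (dx^* ) *)
Definition e3 := ('I_3 + 'I_3)%type.
Definition dxi := (V * 'I_3)%type.

Definition levi (i j k : 'I_3) : R :=
  if [|| i == j, j == k | i == k] then 0
  else if (j == (i.+1 %% 3)%N :> nat) then 1 else -1.

(* f1 : e(3) -> (dx): infinitesimal motion b |-> displacements of vertices *)
Definition f1 (x : coords) (p : dxi) (b : e3) : R :=
  match b with
  | inl k => (p.2 == k)%:R
  | inr k => \sum_(m < 3) levi p.2 k m * x p.1 m
  end.

Definition f2 (x : coords) (e : E) (p : dxi) : R :=
  derive1 (fun s : R => edge_len
            (fun B c => x B c + (if (B == p.1) && (c == p.2) then s else 0)) e) 0.

Definition f3 (x : coords) (i j : E) : R :=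
  derive1 (fun s : R => deficit_lift x
            (fun e => edge_len x e + (if e == j then s else 0)) i) 0.

Definition f4 (x : coords) (p : dxi) (i : E) : R := - f2 x i p.
Definition f5 (x : coords) (b : e3) (p : dxi) : R := f1 x p b.

End Geom.

(* Main.v *)
Require Import Defs.
From HB Require Import structures.
From mathcomp Require Import all_boot all_order all_algebra all_fingroup.
From mathcomp Require Import all_classical all_reals all_analysis.
From mathcomp Require Import ring lra.
Import Order.TTheory GRing.Theory Num.Theory.
Local Open Scope ring_scope.

Unset Implicit Arguments.

Section Der.
Set Implicit Arguments.
Context {R : realType}.
Implicit Types (f g : R -> R) (x a b k : R).

Definition isd x f a := is_derive x 1 f a.

Lemma dcst x a : isd x (fun _ : R => a) 0.
Proof. exact: is_derive_cst. Qed.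

Lemma did x : isd x (fun s : R => s) 1.
Proof. exact: is_derive_id. Qed.

Lemma dadd f g x a b : isd x f a -> isd x g b ->
  isd x (fun s => f s + g s) (a + b).
Proof. move=> Hf Hg; exact: is_deriveD. Qed.

Lemma dsub f g x a b : isd x f a -> isd x g b ->
  isd x (fun s => f s - g s) (a - b).
Proof. move=> Hf Hg; exact: is_deriveB. Qed.

Lemma dopp f x a : isd x f a -> isd x (fun s => - f s) (- a).
Proof. move=> Hf; exact: is_deriveN. Qed.

Lemma dmul f g x a b : isd x f a -> isd x g b ->
  isd x (fun s => f s * g s) (f x * b + g x * a).
Proof. move=> Hf Hg; exact: (is_deriveM Hf Hg). Qed.

Lemma dinv f x a : f x != 0 -> isd x f a ->
  isd x (fun s => (f s)^-1) (- (f x) ^- 2 * a).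
Proof. move=> H Hf; exact: (is_deriveV H Hf). Qed.

Lemma dcomp f g x a b : is_derive (g x) 1 f a -> isd x g b ->
  isd x (fun s => f (g s)) (a * b).
Proof. move=> Hf Hg; exact: (is_derive1_comp Hf Hg). Qed.

Lemma dsqrt f x a : 0 < f x -> isd x f a ->
  isd x (fun s => Num.sqrt (f s)) ((2 * Num.sqrt (f x))^-1 * a).
Proof. move=> H Hf; apply: dcomp => //; exact: is_derive1_sqrt. Qed.

Lemma dacos f x a : -1 < f x < 1 -> isd x f a ->
  isd x (fun s => acos (f s)) (- (Num.sqrt (1 - f x ^+ 2))^-1 * a).
Proof. move=> H Hf; apply: dcomp => //; exact: is_derive1_acos. Qed.

Lemma deq f x a b : isd x f a -> a = b -> isd x f b.
Proof. by move=> H <-. Qed.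

Lemma dfeq f g x a : f =1 g -> isd x f a -> isd x g a.
Proof. by move=> /funext ->. Qed.

Lemma dsum (I : Type) (r : seq I) (P : pred I) (h : I -> R -> R) (dh : I -> R) x :
  (forall i, P i -> isd x (h i) (dh i)) ->
  isd x (fun s => \sum_(i <- r | P i) h i s) (\sum_(i <- r | P i) dh i).
Proof.
move=> H; elim: r => [|i r IH].
  apply: (dfeq (f:=fun _ => 0)); first by move=> s; rewrite big_nil.
  by rewrite big_nil; exact: dcst.
rewrite big_cons; case: (boolP (P i)) => Pi.
  apply: (dfeq (f:=fun s => h i s + \sum_(j <- r | P j) h j s)).
    by move=> s; rewrite big_cons Pi.
  exact: dadd (H i Pi) IH.
apply: (dfeq (f:=fun s => \sum_(j <- r | P j) h j s)) => //.
by move=> s; rewrite big_cons (negbTE Pi).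
Qed.

Lemma derive1_val f x a : isd x f a -> derive1 f x = a.
Proof. by move=> H; rewrite derive1E; exact: derive_val. Qed.

Lemma dlin x a k : isd x (fun s => a + s * k) k.
Proof.
apply: deq.
  apply: dadd; first exact: dcst.
  apply: dmul; [exact: did|exact: dcst].
by rewrite mulr0 mulr1 !add0r.
Qed.

Lemma dsq f x a : isd x f a -> isd x (fun s => f s ^+ 2) (2 * f x * a).
Proof.
move=> H; apply: (dfeq (f:=fun s => f s * f s)); first by move=> s; rewrite expr2.
apply: deq; first exact: (dmul H H).
ring.
Qed.

Lemma dscal f x a c : isd x f a -> isd x (fun s => c * f s) (c * a).
Proof. move=> H; apply: deq; first by apply: dmul; [exact: dcst|exact: H].
rewrite /=; ring. Qed.

End Der.

Unset Implicit Arguments.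

Lemma lift_inord n (i : 'I_n.+2) (j : 'I_n.+1) : lift i j = inord (bump i j).
Proof. by apply: val_inj; rewrite /= inordK //; exact: (ltn_ord (lift i j)). Qed.
Lemma ord0_inord n : (ord0 : 'I_n.+1) = inord 0.
Proof. by apply: val_inj; rewrite /= inordK. Qed.
Lemma inord_eq k m n : (m < k.+1)%N -> (n < k.+1)%N -> (inord m == inord n :> 'I_k.+1) = (m == n).
Proof. by move=> hm hn; apply/eqP/eqP => [/(congr1 val)|->//]; rewrite /= !inordK. Qed.
Ltac ordnorm := rewrite ?lift_inord /= ?ord0_inord /bump /=; rewrite ?inordK; [ | exact isT ..]; rewrite /addn /addn_rec /=; rewrite ?inord_eq; [ | exact isT ..]; rewrite /=.
Section D.
Variable R : comNzRingType.
Lemma det2E (f : 'I_2 -> 'I_2 -> R) :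
  \det (\matrix_(i, j) f i j) = f (inord 0) (inord 0) * f (inord 1) (inord 1) - f (inord 0) (inord 1) * f (inord 1) (inord 0).
Proof.
rewrite (expand_det_row _ ord0) !big_ord_recl big_ord0 /cofactor !det_mx11 !mxE /=.
ordnorm. ring.
Qed.
Lemma det2E' (B : 'M[R]_2) :
  \det B = B (inord 0) (inord 0) * B (inord 1) (inord 1) - B (inord 0) (inord 1) * B (inord 1) (inord 0).
Proof.
have -> : B = \matrix_(i, j) B i j by apply/matrixP => i j; rewrite mxE.
by rewrite det2E !mxE.
Qed.
Lemma det3E (f : 'I_3 -> 'I_3 -> R) :
  \det (\matrix_(i, j) f i j) =
  f (inord 0) (inord 0) * (f (inord 1) (inord 1) * f (inord 2) (inord 2) - f (inord 1) (inord 2) * f (inord 2) (inord 1))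
  - f (inord 0) (inord 1) * (f (inord 1) (inord 0) * f (inord 2) (inord 2) - f (inord 1) (inord 2) * f (inord 2) (inord 0))
  + f (inord 0) (inord 2) * (f (inord 1) (inord 0) * f (inord 2) (inord 1) - f (inord 1) (inord 1) * f (inord 2) (inord 0)).
Proof.
rewrite (expand_det_row _ ord0) !big_ord_recl big_ord0 /cofactor.
rewrite !det2E' !mxE.
ordnorm. ring.
Qed.
Lemma det3E' (B : 'M[R]_3) :
  \det B =
  B (inord 0) (inord 0) * (B (inord 1) (inord 1) * B (inord 2) (inord 2) - B (inord 1) (inord 2) * B (inord 2) (inord 1))
  - B (inord 0) (inord 1) * (B (inord 1) (inord 0) * B (inord 2) (inord 2) - B (inord 1) (inord 2) * B (inord 2) (inord 0))
  + B (inord 0) (inord 2) * (B (inord 1) (inord 0) * B (inord 2) (inord 1) - B (inord 1) (inord 1) * B (inord 2) (inord 0)).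
Proof.
have -> : B = \matrix_(i, j) B i j by apply/matrixP => i j; rewrite mxE.
by rewrite det3E !mxE.
Qed.
End D.
Section S6.
Variable R : comNzRingType.
Definition condX (a b c d : 'I_4) := [&& (a < b)%N, (c < d)%N & [&& a != c, a != d, b != c & b != d]].
Lemma sum6 (F : 'I_4 -> 'I_4 -> 'I_4 -> 'I_4 -> R) :
  \sum_a \sum_b \sum_c \sum_d (if condX a b c d then F a b c d else 0) =
  F (inord 0) (inord 1) (inord 2) (inord 3) + F (inord 0) (inord 2) (inord 1) (inord 3) +
  F (inord 0) (inord 3) (inord 1) (inord 2) + F (inord 1) (inord 2) (inord 0) (inord 3) +
  F (inord 1) (inord 3) (inord 0) (inord 2) + F (inord 2) (inord 3) (inord 0) (inord 1).
Proof.
rewrite !big_ord_recl !big_ord0 /condX.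
ordnorm.
rewrite !addr0 !add0r.
ring.
Qed.
End S6.

Unset Implicit Arguments.


Section Geo.
Context {R : realType}.
Implicit Types (u v w du dv dw : 'I_3 -> R).

Definition dot u v := u (inord 0) * v (inord 0) + u (inord 1) * v (inord 1) + u (inord 2) * v (inord 2).
Definition tp u v w :=
  u (inord 0) * (v (inord 1) * w (inord 2) - v (inord 2) * w (inord 1))
  - u (inord 1) * (v (inord 0) * w (inord 2) - v (inord 2) * w (inord 0))
  + u (inord 2) * (v (inord 0) * w (inord 1) - v (inord 1) * w (inord 0)).
Definition Nc u v w := dot u u * dot v w - dot u v * dot u w.
Definition Duv u v := dot u u * dot v v - dot u v ^+ 2.
Definition Dc u v w := Duv u v * Duv u w.
Definition dNc u v w du dv dw :=
  2 * dot u du * dot v w + dot u u * (dot dv w + dot v dw)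
  - (dot du v + dot u dv) * dot u w - dot u v * (dot du w + dot u dw).
Definition dDuv u v du dv :=
  2 * dot u du * dot v v + dot u u * (2 * dot v dv) - 2 * dot u v * (dot du v + dot u dv).
Definition dDc u v w du dv dw := dDuv u v du dv * Duv u w + Duv u v * dDuv u w du dw.
Definition Hh u v du dv := dot u u * tp u v dv - dot u v * tp u v du.
Definition ht u v du dv := Hh u v du dv / Duv u v.

Lemma DN_id u v w : Dc u v w - Nc u v w ^+ 2 = dot u u * tp u v w ^+ 2.
Proof. rewrite /Dc /Duv /Nc /dot /tp; ring. Qed.

Lemma dN_id u v w du dv dw :
  - (2 * dNc u v w du dv dw * Dc u v w - Nc u v w * dDc u v w du dv dw) =
  2 * tp u v w * (Hh u w du dw * Duv u v - Hh u v du dv * Duv u w).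
Proof. rewrite /dDc /dDuv /Dc /Hh /Duv /Nc /dNc /dot /tp; ring. Qed.

Lemma Duv_sos u v : Duv u v =
  (u (inord 1) * v (inord 2) - u (inord 2) * v (inord 1)) ^+ 2 +
  (u (inord 2) * v (inord 0) - u (inord 0) * v (inord 2)) ^+ 2 +
  (u (inord 0) * v (inord 1) - u (inord 1) * v (inord 0)) ^+ 2.
Proof. rewrite /Duv /dot; ring. Qed.

Lemma Duv_gt0 u v w : tp u v w != 0 -> 0 < Duv u v.
Proof.
move=> H; rewrite Duv_sos.
set c0 := (u (inord 1) * v (inord 2) - u (inord 2) * v (inord 1)).
set c1 := (u (inord 2) * v (inord 0) - u (inord 0) * v (inord 2)).
set c2 := (u (inord 0) * v (inord 1) - u (inord 1) * v (inord 0)).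
have E : tp u v w = c0 * w (inord 0) + c1 * w (inord 1) + c2 * w (inord 2).
  by rewrite /c0 /c1 /c2 /tp; ring.
rewrite lt_neqAle !addr_ge0 ?sqr_ge0 // andbT eq_sym.
apply: contra H; rewrite paddr_eq0 ?addr_ge0 ?sqr_ge0 // paddr_eq0 ?sqr_ge0 //.
rewrite !sqrf_eq0 => /andP[/andP[/eqP h0 /eqP h1] /eqP h2].
by rewrite E h0 h1 h2 !mul0r !addr0.
Qed.

Lemma Dc_gt0 u v w : tp u v w != 0 -> 0 < Dc u v w.
Proof.
move=> H; rewrite /Dc mulr_gt0 //; first exact: (Duv_gt0 u v w H).
apply: (Duv_gt0 u w v); apply: contra H => /eqP H.
have -> : tp u v w = - tp u w v by rewrite /tp; ring.
by rewrite H oppr0.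
Qed.

Lemma ht_swap a b c du' db dc : let u := (fun k => b k - a k) in
  ht (fun k => a k - b k) (fun k => c k - b k) (fun k => du' k - db k) (fun k => dc k - db k)
  = - ht u (fun k => c k - a k) (fun k => db k - du' k) (fun k => dc k - du' k).
Proof.
move=> u; rewrite /ht.
have -> : Duv (fun k => a k - b k) (fun k => c k - b k) = Duv u (fun k => c k - a k).
  by rewrite /Duv /u /dot; ring.
rewrite -mulNr; congr (_ / _).
rewrite /Hh /u /dot /tp; ring.
Qed.

Definition detd (Q : 'I_4 -> 'I_3 -> R) (a b c d : 'I_4) :=
  tp (fun k => Q b k - Q a k) (fun k => Q c k - Q a k) (fun k => Q d k - Q a k).
Definition M4 (Q : 'I_4 -> 'I_3 -> R) : 'M[R]_4 :=
  \matrix_(i, j) (if j == ord0 then 1 else Q i (inord j.-1)).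
Lemma det4aff Q : \det (M4 Q) = detd Q (inord 0) (inord 1) (inord 2) (inord 3).
Proof.
rewrite (expand_det_col _ ord0) !big_ord_recl big_ord0 /cofactor !det3E' !mxE /=.
ordnorm. rewrite /detd /tp; ring.
Qed.
Definition Pmx (tau : 'I_4 -> 'I_4) : 'M[R]_4 := \matrix_(i, j) (tau i == j)%:R.
Lemma M4_comp Q tau : M4 (fun i => Q (tau i)) = Pmx tau *m M4 Q.
Proof.
apply/matrixP => i j; rewrite !mxE (bigD1 (tau i)) //= !mxE eqxx mul1r big1 ?addr0 //.
by move=> k hk; rewrite mxE [tau i == k]eq_sym (negbTE hk) mul0r.
Qed.
Definition tup (a b c d : 'I_4) : 'I_4 -> 'I_4 := fun i =>
  if i == inord 0 then a else if i == inord 1 then b else if i == inord 2 then c else d.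
Lemma detd_tup Q a b c d :
  detd Q a b c d = \det (Pmx (tup a b c d)) * detd Q (inord 0) (inord 1) (inord 2) (inord 3).
Proof.
rewrite -det4aff -det_mulmx -M4_comp det4aff /detd /tup.
by rewrite !inord_eq.
Qed.
Lemma Pmx_perm (p : {perm 'I_4}) tau : Pmx (fun i => p (tau i)) = Pmx tau *m perm_mx p.
Proof.
apply/matrixP => i j; rewrite !mxE (bigD1 (tau i)) //= !mxE eqxx mul1r big1 ?addr0 //.
by move=> k hk; rewrite mxE [tau i == k]eq_sym (negbTE hk) mul0r.
Qed.
End Geo.

Unset Implicit Arguments.


Section Dih.
Context {R : realType}.
Implicit Types (G H : 'I_4 -> 'I_4 -> R).

Definition gr G (p q r : 'I_4) := (G p q + G p r - G q r) / 2.
Definition Nf G a b c d := G a b * gr G a c d - gr G a b c * gr G a b d.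
Definition Df G a b c d := (G a b * G a c - gr G a b c ^+ 2) * (G a b * G a d - gr G a b d ^+ 2).
Definition Ndf G H a b c d :=
  H a b * gr G a c d + G a b * gr H a c d - gr H a b c * gr G a b d - gr G a b c * gr H a b d.
Definition Ddf G H a b c d :=
  (H a b * G a c + G a b * H a c - 2 * gr G a b c * gr H a b c) * (G a b * G a d - gr G a b d ^+ 2)
  + (G a b * G a c - gr G a b c ^+ 2) * (H a b * G a d + G a b * H a d - 2 * gr G a b d * gr H a b d).
Definition Theta G H a b c d :=
  - (Num.sqrt (1 - (Nf G a b c d / Num.sqrt (Df G a b c d)) ^+ 2))^-1 *
  (Ndf G H a b c d * (Num.sqrt (Df G a b c d))^-1 +
   Nf G a b c d * (- (Num.sqrt (Df G a b c d)) ^- 2 *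
       ((2 * Num.sqrt (Df G a b c d))^-1 * Ddf G H a b c d))).

Lemma dihedralE (L : 'I_4 -> 'I_4 -> R) a b c d :
  dihedral L a b c d = acos (Nf (fun p q => L p q ^+ 2) a b c d / Num.sqrt (Df (fun p q => L p q ^+ 2) a b c d)).
Proof. by []. Qed.

Variable Gs : R -> 'I_4 -> 'I_4 -> R.
Variable H : 'I_4 -> 'I_4 -> R.
Hypothesis dG : forall p q, isd 0 (fun s => Gs s p q) (H p q).

Lemma dgr p q r : isd 0 (fun s => gr (Gs s) p q r) (gr H p q r).
Proof.
rewrite /gr; apply: (dfeq (f := fun s => 2^-1 * (Gs s p q + Gs s p r - Gs s q r))).
  by move=> s; rewrite mulrC.
apply: deq; first by apply: dscal; apply: dsub; first apply: dadd; exact: dG.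
by rewrite mulrC.
Qed.

Lemma dNf a b c d : isd 0 (fun s => Nf (Gs s) a b c d) (Ndf (Gs 0) H a b c d).
Proof.
rewrite /Nf; apply: deq.
  apply: dsub; apply: dmul; (exact: dG || exact: dgr).
rewrite /Ndf; ring.
Qed.

Lemma dDf a b c d : isd 0 (fun s => Df (Gs s) a b c d) (Ddf (Gs 0) H a b c d).
Proof.
rewrite /Df; apply: deq.
  apply: dmul; apply: dsub; (apply: dmul; (exact: dG || exact: dgr)) || apply: dsq; exact: dgr.
rewrite /Ddf; ring.
Qed.

Lemma dTheta a b c d : 0 < Df (Gs 0) a b c d ->
  -1 < Nf (Gs 0) a b c d / Num.sqrt (Df (Gs 0) a b c d) < 1 ->
  isd 0 (fun s => acos (Nf (Gs s) a b c d / Num.sqrt (Df (Gs s) a b c d))) (Theta (Gs 0) H a b c d).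
Proof.
move=> hD hZ.
apply: deq.
  apply: dacos => //.
  apply: dmul; first exact: dNf.
  apply: dinv; first by rewrite sqrtr_eq0 -ltNge.
  apply: dsqrt => //; exact: dDf.
rewrite /Theta; ring.
Qed.
End Dih.

Unset Implicit Arguments.


Section F2.
Variables (R : realType) (V E T : finType) (K : triangulation V E T).

Lemma sum_delta (I : finType) (F : I -> R) (c0 : I) :
  \sum_(c : I) F c * (c == c0)%:R = F c0.
Proof.
rewrite (bigD1 c0) //= eqxx mulr1 big1 ?addr0 // => c /negbTE ->.
by rewrite mulr0.
Qed.

Lemma sum_delta' (I : finType) (F : I -> R) (c0 : I) :
  \sum_(c : I) (c0 == c)%:R * F c = F c0.
Proof.
rewrite -[RHS](sum_delta _ F c0); apply: eq_bigr => c _.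
by rewrite mulrC eq_sym.
Qed.

Lemma f2E (x : coords R V) (e : E) (p : dxi V) :
  let A := (ends K e).1 in let B := (ends K e).2 in
  0 < \sum_(c < 3) (x B c - x A c) ^+ 2 ->
  f2 K x e p = (x B p.2 - x A p.2) * ((B == p.1)%:R - (A == p.1)%:R)
                / edge_len K x e.
Proof.
move=> A B Hpos; rewrite /f2; apply: derive1_val.
set k : 'I_3 -> R := fun c => ((B == p.1)%:R - (A == p.1)%:R) * (c == p.2)%:R.
apply: (dfeq (f:=fun s => Num.sqrt (\sum_(c < 3) (x B c - x A c + s * k c) ^+ 2))).
  move=> s; rewrite /edge_len -/A -/B; congr Num.sqrt; apply: eq_bigr => c _.
  congr (_ ^+ 2); rewrite /k.
  case: (B == p.1); case: (A == p.1); case: (c == p.2); rewrite /= ?mulr0 ?mulr1; ring.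
apply: deq.
  apply: dsqrt; last by apply: dsum => c _; apply: dsq; exact: dlin.
  by under eq_bigr do rewrite mul0r addr0.
rewrite /edge_len -/A -/B.
under eq_bigr do rewrite mul0r addr0.
set S := \sum_(c < 3) _.
have -> : \sum_(c < 3) (2 * (x B c - x A c + 0 * k c) * k c) = 2 * ((x B p.2 - x A p.2) * ((B == p.1)%:R - (A == p.1)%:R)).
  rewrite -(sum_delta _ (fun c => 2 * ((x B c - x A c) * ((B == p.1)%:R - (A == p.1)%:R))) p.2).
  apply: eq_bigr => c _; rewrite /k; ring.
have hs : Num.sqrt S != 0 by rewrite sqrtr_eq0 -ltNge.
field; exact: hs.
Qed.
End F2.

Set Implicit Arguments.
Unset Strict Implicit.


Section Sym.
Context {R : realType}.
Implicit Types (G H : 'I_4 -> 'I_4 -> R).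

Definition Rf G H a b c d := Ndf G H a b c d * Df G a b c d - Nf G a b c d * Ddf G H a b c d / 2.
Definition Ep (a' b' : 'I_4) : 'I_4 -> 'I_4 -> R :=
  fun p q => ((p == a') && (q == b') || (p == b') && (q == a'))%:R.
Definition sumY (F : 'I_4 -> 'I_4 -> R) :=
  F (inord 0) (inord 1) + F (inord 0) (inord 2) + F (inord 0) (inord 3) +
  F (inord 1) (inord 2) + F (inord 1) (inord 3) + F (inord 2) (inord 3).

Lemma condX_cases a b c d : condX a b c d ->
  [\/ (a, b, c, d) = (inord 0, inord 1, inord 2, inord 3),
      (a, b, c, d) = (inord 0, inord 2, inord 1, inord 3) |
   [\/ (a, b, c, d) = (inord 0, inord 3, inord 1, inord 2),
      (a, b, c, d) = (inord 1, inord 2, inord 0, inord 3) |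
   [\/ (a, b, c, d) = (inord 1, inord 3, inord 0, inord 2) |
      (a, b, c, d) = (inord 2, inord 3, inord 0, inord 1)]]].
Proof.
have cb : condX a b c d -> ((val a, val b, val c, val d) \in
   [:: (0,1,2,3); (0,2,1,3); (0,3,1,2); (1,2,0,3); (1,3,0,2); (2,3,0,1)]%N).
  by case: a => [[|[|[|[|?]]]] ?] //; case: b => [[|[|[|[|?]]]] ?] //;
     case: c => [[|[|[|[|?]]]] ?] //; case: d => [[|[|[|[|?]]]] ?] //.
have E : forall n (i : 'I_n.+1) k, val i = k -> i = inord k by move=> n i k <-; rewrite inord_val.
move=> /cb; rewrite !inE => /orP[/eqP[/E-> /E-> /E-> /E->]|/orP[/eqP[/E-> /E-> /E-> /E->]|
   /orP[/eqP[/E-> /E-> /E-> /E->]|/orP[/eqP[/E-> /E-> /E-> /E->]|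
   /orP[/eqP[/E-> /E-> /E-> /E->]|/eqP[/E-> /E-> /E-> /E->]]]]]].
- by constructor 1.
- by constructor 2.
- by constructor 3; constructor 1.
- by constructor 3; constructor 2.
- by constructor 3; constructor 3; constructor 1.
- by constructor 3; constructor 3; constructor 2.
Qed.

Definition symm G := forall p q, G p q = G q p.

Ltac symn G Gs := rewrite ?(Gs (inord 1) (inord 0)) ?(Gs (inord 2) (inord 0)) ?(Gs (inord 3) (inord 0))
  ?(Gs (inord 2) (inord 1)) ?(Gs (inord 3) (inord 1)) ?(Gs (inord 3) (inord 2)).

Lemma Rf_dec G H a b c d : symm H -> condX a b c d ->
  Rf G H a b c d = sumY (fun p q => H p q * Rf G (Ep p q) a b c d).
Proof.
move=> Hs hc; case: (condX_cases hc) => [| |[| |[|]]] [-> -> -> ->];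
rewrite /sumY /Rf /Ndf /Ddf /Ep /gr; ordnorm; symn H Hs; ring.
Qed.

Definition cc G a b c d a' b' := Rf G (Ep a' b') a b c d / (G a b * Df G a b c d).

Lemma cc_sym G a b c d a' b' c' d' : symm G -> condX a b c d -> condX a' b' c' d' ->
  G a b * Df G a b c d != 0 -> G a' b' * Df G a' b' c' d' != 0 ->
  cc G a b c d a' b' = cc G a' b' c' d' a b.
Proof.
move=> Gs h1 h2 n1 n2; rewrite /cc; apply/eqP; rewrite eqr_div //; apply/eqP.
move: n1 n2 => _ _.
case: (condX_cases h1) => [| |[| |[|]]] [-> -> -> ->];
case: (condX_cases h2) => [| |[| |[|]]] [-> -> -> ->];
rewrite /Rf /Ndf /Ddf /Df /Nf /Ep /gr; ordnorm; symn G Gs; field; rewrite ?pnatr_eq0 ?oner_eq0 //.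
Qed.
End Sym.

Set Implicit Arguments.
Unset Strict Implicit.


Lemma ord4_cases (i : 'I_4) : [\/ i = inord 0, i = inord 1, i = inord 2 | i = inord 3].
Proof.
case: i => [[|[|[|[|n]]]] Hi].
- by constructor 1; apply: val_inj; rewrite /= inordK.
- by constructor 2; apply: val_inj; rewrite /= inordK.
- by constructor 3; apply: val_inj; rewrite /= inordK.
- by constructor 4; apply: val_inj; rewrite /= inordK.
- by [].
Qed.

Lemma ord3_cases (i : 'I_3) : [\/ i = inord 0, i = inord 1 | i = inord 2].
Proof.
case: i => [[|[|[|n]]] Hi].
- by constructor 1; apply: val_inj; rewrite /= inordK.
- by constructor 2; apply: val_inj; rewrite /= inordK.
- by constructor 3; apply: val_inj; rewrite /= inordK.
- by [].
Qed.

Lemma sum3E {R : comNzRingType} (F : 'I_3 -> R) :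
  \sum_(c < 3) F c = F (inord 0) + F (inord 1) + F (inord 2).
Proof. rewrite !big_ord_recl big_ord0; ordnorm; by rewrite addr0 addrA. Qed.

Section Main.
Variables (R : realType) (V E T : finType) (K : triangulation V E T).
Hypothesis HK : closed_oriented_3manifold K.
Variable x : coords R V.
Hypothesis Hgen : forall t : T, tet_vol K x t != 0.

Lemma tv_inj t : injective (tv K t). Proof. by case: HK => H _ _ _ _; exact: H. Qed.
Lemma te_sym t a b : te K t a b = te K t b a. Proof. by case: HK => _ H _ _ _; exact: H. Qed.
Lemma te_ends t a b : a != b ->
  ends K (te K t a b) = (tv K t a, tv K t b) \/ ends K (te K t a b) = (tv K t b, tv K t a).
Proof. by case: HK => _ _ H _ _; exact: H. Qed.
Lemma e_surj e : exists t a b, a != b /\ te K t a b = e.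
Proof. by case: HK => _ _ _ _ [_ H _ _ _]; exact: H. Qed.

Definition Q t : 'I_4 -> 'I_3 -> R := fun k c => x (tv K t k) c.
Definition d0 t := detd (Q t) (inord 0) (inord 1) (inord 2) (inord 3).

Lemma volE t : tet_vol K x t = d0 t / 6.
Proof.
rewrite /tet_vol det3E' !mxE; ordnorm; try by rewrite /d0 /detd /tp /Q.
Qed.

Lemma d0_neq0 t : d0 t != 0.
Proof.
have := Hgen t; rewrite volE; apply: contra => /eqP ->; by rewrite mul0r.
Qed.

Definition dist4 (a b c d : 'I_4) := [&& a != b, a != c, a != d & [&& b != c, b != d & c != d]].

Lemma tup_inj a b c d : dist4 a b c d -> injective (tup a b c d).
Proof.
case/and4P => hab hac had /and3P [hbc hbd hcd] i j.
rewrite /tup.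
case: (ord4_cases i) => ->; case: (ord4_cases j) => ->; rewrite ?inord_eq //= => h;
  by move: hab hac had hbc hbd hcd; rewrite h ?eqxx.
Qed.

Lemma det_tup_sq a b c d : dist4 a b c d -> \det (@Pmx R (tup a b c d)) ^+ 2 = 1.
Proof.
move=> hd.
have -> : @Pmx R (tup a b c d) = perm_mx (perm (tup_inj hd)).
  by apply/matrixP => i j; rewrite !mxE permE.
by rewrite det_perm sqrr_sign.
Qed.

Lemma detd_sq t a b c d : dist4 a b c d -> detd (Q t) a b c d ^+ 2 = d0 t ^+ 2.
Proof. by move=> hd; rewrite detd_tup exprMn det_tup_sq // mul1r. Qed.

Lemma detd_neq0 t a b c d : dist4 a b c d -> detd (Q t) a b c d != 0.
Proof.
move=> hd; apply/eqP => h; have := detd_sq t hd; rewrite h expr2 mul0r => /esym/eqP.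
by rewrite sqrf_eq0 (negbTE (d0_neq0 t)).
Qed.

Lemma detd_abs t a b c d : dist4 a b c d -> `|detd (Q t) a b c d| = `|d0 t|.
Proof.
move=> hd; apply/eqP; rewrite -(@eqrXn2 _ 2) // ?normr_ge0 //.
by rewrite -!normrX detd_sq.
Qed.

Lemma complete (p q : 'I_4) : p != q -> exists r s, dist4 p q r s.
Proof.
case: (ord4_cases p) => ->; case: (ord4_cases q) => -> //; rewrite ?inord_eq // => _;
 [exists (inord 2), (inord 3)|exists (inord 1), (inord 3)|exists (inord 1), (inord 2)
 |exists (inord 2), (inord 3)|exists (inord 0), (inord 3)|exists (inord 0), (inord 2)
 |exists (inord 1), (inord 3)|exists (inord 0), (inord 3)|exists (inord 0), (inord 1)
 |exists (inord 1), (inord 2)|exists (inord 0), (inord 2)|exists (inord 0), (inord 1)];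
 by rewrite /dist4 ?inord_eq.
Qed.

Definition dif (u v : 'I_3 -> R) : 'I_3 -> R := fun k => v k - u k.

Lemma dot_pos t p q : p != q -> 0 < dot (dif (Q t p) (Q t q)) (dif (Q t p) (Q t q)).
Proof.
move=> /complete [r [s hd]].
have := Duv_gt0 _ _ _ (detd_neq0 t hd).
rewrite /Duv => H.
have h0 : 0 <= dot (dif (Q t p) (Q t q)) (dif (Q t p) (Q t q)).
  by rewrite /dot !addr_ge0 // -expr2 sqr_ge0.
rewrite lt_neqAle h0 andbT eq_sym; apply/eqP => h.
move: H; rewrite /dif in h *; rewrite h mul0r sub0r oppr_gt0 ltNge sqr_ge0.
done.
Qed.

Lemma sumsq_dot (A B : V) :
  \sum_(c < 3) (x B c - x A c) ^+ 2 = dot (dif (x A) (x B)) (dif (x A) (x B)).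
Proof. by rewrite sum3E /dot /dif !expr2. Qed.

Lemma sumsq_sym (A B : V) :
  \sum_(c < 3) (x B c - x A c) ^+ 2 = \sum_(c < 3) (x A c - x B c) ^+ 2.
Proof. by apply: eq_bigr => c _; rewrite -sqrrN opprB. Qed.

Lemma edge_pos e : 0 < \sum_(c < 3) (x (ends K e).2 c - x (ends K e).1 c) ^+ 2.
Proof.
have [t [a [b [hab <-]]]] := e_surj e.
case: (te_ends t hab) => ->; rewrite /=; last rewrite sumsq_sym; rewrite sumsq_dot; exact: dot_pos.
Qed.

Lemma edge_len_pos e : 0 < edge_len K x e.
Proof. by rewrite /edge_len sqrtr_gt0 edge_pos. Qed.

Lemma f2E' e p : f2 K x e p = (x (ends K e).2 p.2 - x (ends K e).1 p.2) *
   (((ends K e).2 == p.1)%:R - ((ends K e).1 == p.1)%:R) / edge_len K x e.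
Proof. exact: f2E (edge_pos e). Qed.

Lemma levi_sum (d : 'I_3 -> R) k :
  \sum_(c < 3) d c * \sum_(m < 3) @levi R c k m * d m = 0.
Proof.
rewrite !sum3E.
case: (ord3_cases k) => ->; rewrite /levi; ordnorm; rewrite /=; ring.
Qed.

Lemma part1 e b : \sum_(p : dxi V) f2 K x e p * f1 x p b = 0.
Proof.
rewrite -(pair_bigA _ (fun v c => f2 K x e (v, c) * f1 x (v, c) b)) /=.
set A := (ends K e).1; set B := (ends K e).2.
under eq_bigr => v _ do under eq_bigr => c _ do rewrite f2E' /= -/A -/B.
rewrite exchange_big /=.
have H : forall c : 'I_3, \sum_(v : V) (x B c - x A c) * ((B == v)%:R - (A == v)%:R) /
      edge_len K x e * f1 x (v, c) b =
      (x B c - x A c) / edge_len K x e * (f1 x (B, c) b - f1 x (A, c) b).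
  move=> c; rewrite mulrBr -(@sum_delta' R _ (fun v => f1 x (v, c) b) B) -(@sum_delta' R _ (fun v => f1 x (v, c) b) A).
  rewrite mulr_sumr mulr_sumr -sumrB; apply: eq_bigr => v _; ring.
under eq_bigr => c _ do rewrite H.
clear H.
case: b => k /=.
  by rewrite big1 // => c _; rewrite subrr mulr0.
rewrite (_ : \sum_(c < 3) _ = (edge_len K x e)^-1 * \sum_(c < 3) dif (x A) (x B) c *
   \sum_(m < 3) @levi R c k m * dif (x A) (x B) m); last first.
  by rewrite /dif !sum3E; ring.
by rewrite levi_sum mulr0.
Qed.

Lemma part4 b j : \sum_(p : dxi V) f5 x b p * f4 K x p j = 0.
Proof.
rewrite (eq_bigr (fun p => - (f2 K x j p * f1 x p b))); last first.
  by move=> p _; rewrite /f5 /f4 mulrN mulrC.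
by rewrite sumrN part1 oppr0.
Qed.


Definition L0 t p q := edge_len K x (te K t p q).
Definition G0 t : 'I_4 -> 'I_4 -> R := fun p q => L0 t p q ^+ 2.
Definition Hj t j : 'I_4 -> 'I_4 -> R := fun p q => 2 * L0 t p q * (te K t p q == j)%:R.

Lemma L0_sym t p q : L0 t p q = L0 t q p.
Proof. by rewrite /L0 te_sym. Qed.
Lemma G0_sym t : symm (G0 t).
Proof. by move=> p q; rewrite /G0 L0_sym. Qed.
Lemma Hj_sym t j : symm (Hj t j).
Proof. by move=> p q; rewrite /Hj L0_sym te_sym. Qed.

Lemma G0E t p q : p != q -> G0 t p q = dot (dif (Q t p) (Q t q)) (dif (Q t p) (Q t q)).
Proof.
move=> hpq; rewrite /G0 /L0 /edge_len sqr_sqrtr ?sumr_ge0 // => [|c _]; last exact: sqr_ge0.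
by case: (te_ends t hpq) => -> /=; [|rewrite sumsq_sym]; rewrite sumsq_dot.
Qed.

Lemma L0_pos t p q : 0 < L0 t p q.
Proof. exact: edge_len_pos. Qed.

Lemma dist4_pairs a b c d : dist4 a b c d ->
  [/\ a != b, a != c, a != d & [/\ b != c, b != d & c != d]].
Proof. by case/and4P => ? ? ? /and3P[? ? ?]; split. Qed.

Section Slot.
Variables (t : T) (a b c d : 'I_4).
Hypothesis hd : dist4 a b c d.
Let U := dif (Q t a) (Q t b).
Let Vv := dif (Q t a) (Q t c).
Let W := dif (Q t a) (Q t d).

Lemma NfE : Nf (G0 t) a b c d = Nc U Vv W.
Proof.
case: (dist4_pairs hd) => hab hac had [hbc hbd hcd].
rewrite /Nf /gr !G0E // /Nc /U /Vv /W /dot /dif; field; rewrite ?pnatr_eq0 //.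
Qed.

Lemma DfE : Df (G0 t) a b c d = Dc U Vv W.
Proof.
case: (dist4_pairs hd) => hab hac had [hbc hbd hcd].
rewrite /Df /gr !G0E // /Dc /Duv /U /Vv /W /dot /dif; field; rewrite ?pnatr_eq0 //.
Qed.

Lemma tpE : tp U Vv W = detd (Q t) a b c d.
Proof. by []. Qed.

Lemma Df_pos : 0 < Df (G0 t) a b c d.
Proof. rewrite DfE; apply: Dc_gt0; rewrite tpE; exact: detd_neq0. Qed.

Lemma one_minus_Z :
  1 - (Nf (G0 t) a b c d / Num.sqrt (Df (G0 t) a b c d)) ^+ 2 =
  (L0 t a b * `|d0 t| / Num.sqrt (Df (G0 t) a b c d)) ^+ 2.
Proof.
have hD := Df_pos.
have hs : Num.sqrt (Df (G0 t) a b c d) != 0 by rewrite sqrtr_eq0 -ltNge.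
rewrite !expr_div_n sqr_sqrtr ?ltW // exprMn -/(G0 t a b).
rewrite real_normK ?num_real // -(detd_sq t hd) G0E; last by case: (dist4_pairs hd).
rewrite NfE DfE -/U.
have := DN_id U Vv W; rewrite tpE => Ei.
rewrite -Ei; field.
by rewrite -DfE; apply: lt0r_neq0.
Qed.

Lemma Z_bound : -1 < Nf (G0 t) a b c d / Num.sqrt (Df (G0 t) a b c d) < 1.
Proof.
have H := one_minus_Z.
set z := Nf _ _ _ _ _ / _ in H *.
have hpos : 0 < (L0 t a b * `|d0 t| / Num.sqrt (Df (G0 t) a b c d)) ^+ 2.
  rewrite exprn_gt0 // divr_gt0 ?sqrtr_gt0 ?Df_pos // mulr_gt0 ?L0_pos //.
  by rewrite normr_gt0 d0_neq0.
rewrite -H subr_gt0 in hpos.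
apply/andP; split; nra.
Qed.

Lemma ThetaR H :
  Theta (G0 t) H a b c d = - Rf (G0 t) H a b c d / (L0 t a b * `|d0 t| * Df (G0 t) a b c d).
Proof.
rewrite /Theta one_minus_Z sqrtr_sqr ger0_norm; last first.
  by rewrite divr_ge0 ?sqrtr_ge0 // mulr_ge0 ?normr_ge0 // ltW // L0_pos.
have hD := Df_pos.
have hL : L0 t a b != 0 by apply: lt0r_neq0; exact: L0_pos.
have hd0 : `|d0 t| != 0 by rewrite normr_eq0 d0_neq0.
rewrite /Rf.
set D := Df (G0 t) a b c d.
have hD2 : D = Num.sqrt D ^+ 2 by rewrite sqr_sqrtr // ltW.
have hs : Num.sqrt D != 0 by rewrite sqrtr_eq0 -ltNge.
set sD := Num.sqrt D in hD2 hs *.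
rewrite hD2.
field.
by rewrite hs hL hd0.
Qed.
End Slot.

Lemma dih_term t j a b c d : dist4 a b c d ->
  isd 0 (fun s => dihedral (fun p q => edge_len K x (te K t p q) +
                    (if te K t p q == j then s else 0)) a b c d) (Theta (G0 t) (Hj t j) a b c d).
Proof.
move=> hd.
pose Gs (s : R) := fun p q => (edge_len K x (te K t p q) + (if te K t p q == j then s else 0)) ^+ 2.
have dG : forall p q, isd 0 (fun s => Gs s p q) (Hj t j p q).
  move=> p q; rewrite /Gs /Hj /L0.
  case: (te K t p q == j) => /=.
    apply: deq; first by apply: dsq; apply: dadd; [exact: dcst| exact: did].
    rewrite /=; ring.
  apply: deq; first exact: dcst.
  rewrite /=; ring.
have GsE : Gs 0 = G0 t.
  by apply/funext => p; apply/funext => q; rewrite /Gs /G0 /L0; case: ifP => _; rewrite addr0.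
apply: (dfeq (f := fun s => acos (Nf (Gs s) a b c d / Num.sqrt (Df (Gs s) a b c d)))).
  by move=> s; rewrite dihedralE.
apply: deq.
  apply: (dTheta Gs (Hj t j) dG a b c d); rewrite GsE; [exact: Df_pos | exact: Z_bound].
by rewrite GsE.
Qed.

Lemma f3E i j : f3 K x i j = - \sum_(t : T) \sum_(a : 'I_4) \sum_(b : 'I_4) \sum_(c : 'I_4) \sum_(d : 'I_4)
   (if [&& (a < b)%N, (c < d)%N, [&& a != c, a != d, b != c & b != d] & te K t a b == i]
    then Num.sg (tet_vol K x t) * Theta (G0 t) (Hj t j) a b c d else 0).
Proof.
rewrite /f3; apply: derive1_val; rewrite /deficit_lift.
apply: dopp.
apply: dsum => t _; apply: dsum => a _; apply: dsum => b _; apply: dsum => c _; apply: dsum => d _.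
case hc : [&& (a < b)%N, (c < d)%N, [&& a != c, a != d, b != c & b != d] & te K t a b == i];
  last exact: dcst.
rewrite /signed_dihedral; apply: dscal; apply: dih_term.
case/and4P: hc => hab hcd /and4P[hac had hbc hbd] _.
have hab' : a != b by apply: contraTneq hab => ->; rewrite ltnn.
have hcd' : c != d by apply: contraTneq hcd => ->; rewrite ltnn.
by rewrite /dist4 hac had hbc hbd hab' hcd'.
Qed.

Definition vel t (p0 : dxi V) : 'I_4 -> 'I_3 -> R :=
  fun k c => ((tv K t k == p0.1) && (c == p0.2))%:R.
Definition Gd t p0 : 'I_4 -> 'I_4 -> R := fun p q => 2 * L0 t p q * f2 K x (te K t p q) p0.

Lemma GdE t p0 p q : p != q ->
  Gd t p0 p q = 2 * dot (dif (Q t p) (Q t q)) (dif (vel t p0 p) (vel t p0 q)).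
Proof.
move=> hpq; rewrite /Gd f2E' /L0.
have hL : edge_len K x (te K t p q) != 0 by apply: lt0r_neq0; exact: edge_len_pos.
move: hL; set L := edge_len K x (te K t p q) => hL.
case: p0 => v0 c0 /=.
case: (te_ends t hpq) => -> /=;
rewrite /dot /dif /vel /Q /=; case: (ord3_cases c0) => ->; ordnorm; rewrite ?andbT ?andbF /=;
field; exact: hL.
Qed.

Definition htt t p0 a b c := ht (dif (Q t a) (Q t b)) (dif (Q t a) (Q t c))
   (dif (vel t p0 a) (vel t p0 b)) (dif (vel t p0 a) (vel t p0 c)).

Section Slot2.
Variables (t : T) (p0 : dxi V) (a b c d : 'I_4).
Hypothesis hd : dist4 a b c d.
Let U := dif (Q t a) (Q t b).
Let Vv := dif (Q t a) (Q t c).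
Let W := dif (Q t a) (Q t d).
Let dU := dif (vel t p0 a) (vel t p0 b).
Let dV := dif (vel t p0 a) (vel t p0 c).
Let dW := dif (vel t p0 a) (vel t p0 d).

Lemma NdfE : Ndf (G0 t) (Gd t p0) a b c d = dNc U Vv W dU dV dW.
Proof.
case: (dist4_pairs hd) => hab hac had [hbc hbd hcd].
rewrite /Ndf /gr !G0E // !GdE // /dNc /U /Vv /W /dU /dV /dW /dot /dif; field; rewrite ?pnatr_eq0 //.
Qed.

Lemma DdfE : Ddf (G0 t) (Gd t p0) a b c d = dDc U Vv W dU dV dW.
Proof.
case: (dist4_pairs hd) => hab hac had [hbc hbd hcd].
rewrite /Ddf /gr !G0E // !GdE // /dDc /dDuv /Duv /U /Vv /W /dU /dV /dW /dot /dif; field;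
  rewrite ?pnatr_eq0 //.
Qed.

Lemma RfE : Rf (G0 t) (Gd t p0) a b c d =
  - tp U Vv W * (Hh U W dU dW * Duv U Vv - Hh U Vv dU dV * Duv U W).
Proof.
rewrite /Rf (NfE t hd) (DfE t hd) NdfE DdfE.
have Ei := dN_id U Vv W dU dV dW.
move: Ei; set X := Hh U W dU dW * _ - _ => Ei.
nra.
Qed.

Lemma part2_slot : Num.sg (tet_vol K x t) * Theta (G0 t) (Gd t p0) a b c d =
  \det (@Pmx R (tup a b c d)) * (htt t p0 a b d - htt t p0 a b c) / L0 t a b.
Proof.
have hD := Df_pos t hd.
rewrite (ThetaR t hd) RfE (DfE t hd) /Dc /htt /ht -/U -/Vv -/W -/dU -/dV -/dW.
rewrite (DfE t hd) /Dc in hD.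
have hL : L0 t a b != 0 by apply: lt0r_neq0; exact: L0_pos.
have h0 := d0_neq0 t.
have hsg : Num.sg (d0 t) != 0 by rewrite sgr_eq0.
have [hV hW] : Duv U Vv != 0 /\ Duv U W != 0.
  by move: (lt0r_neq0 hD); rewrite mulf_eq0 negb_or => /andP.
rewrite (tpE t) detd_tup -/(d0 t) volE sgrM sgrV (gtr0_sg (ltr0n _ 6)) mulr1 normrEsg.
field.
by rewrite hsg h0 hL hV hW.
Qed.
End Slot2.

Definition sum24 (F : 'I_4 -> 'I_4 -> 'I_4 -> 'I_4 -> R) := F (inord 0) (inord 1) (inord 2) (inord 3) + F (inord 0) (inord 1) (inord 3) (inord 2) + F (inord 0) (inord 2) (inord 1) (inord 3) + F (inord 0) (inord 2) (inord 3) (inord 1) + F (inord 0) (inord 3) (inord 1) (inord 2) + F (inord 0) (inord 3) (inord 2) (inord 1) + F (inord 1) (inord 0) (inord 2) (inord 3) + F (inord 1) (inord 0) (inord 3) (inord 2) + F (inord 1) (inord 2) (inord 0) (inord 3) + F (inord 1) (inord 2) (inord 3) (inord 0) + F (inord 1) (inord 3) (inord 0) (inord 2) + F (inord 1) (inord 3) (inord 2) (inord 0) + F (inord 2) (inord 0) (inord 1) (inord 3) + F (inord 2) (inord 0) (inord 3) (inord 1) + F (inord 2) (inord 1) (inord 0) (inord 3) + F (inord 2) (inord 1) (inord 3) (inord 0) + F (inord 2) (inord 3) (inord 0) (inord 1) + F (inord 2) (inord 3) (inord 1) (inord 0) + F (inord 3) (inord 0) (inord 1) (inord 2) + F (inord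 3) (inord 0) (inord 2) (inord 1) + F (inord 3) (inord 1) (inord 0) (inord 2) + F (inord 3) (inord 1) (inord 2) (inord 0) + F (inord 3) (inord 2) (inord 0) (inord 1) + F (inord 3) (inord 2) (inord 1) (inord 0).

Lemma sum24E (F : 'I_4 -> 'I_4 -> 'I_4 -> 'I_4 -> R) :
  \sum_a \sum_b \sum_c \sum_d (if dist4 a b c d then F a b c d else 0) = sum24 F.
Proof.
rewrite !big_ord_recl !big_ord0 /dist4 /sum24.
ordnorm.
rewrite !addr0 !add0r.
ring.
Qed.

Definition Qs : 'I_4 -> 'I_3 -> R := fun k c => (val k == (val c).+1)%:R.

Definition eps (a b c d : 'I_4) : R := \det (@Pmx R (tup a b c d)).

Lemma epsE a b c d : eps a b c d = detd Qs a b c d.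
Proof.
rewrite /eps detd_tup (_ : detd Qs (inord 0) (inord 1) (inord 2) (inord 3) = 1) ?mulr1 //.
rewrite /detd /tp /Qs; ordnorm; ring.
Qed.

Lemma eps_swap01 a b c d : eps b a c d = - eps a b c d.
Proof. rewrite !epsE /detd /tp; ring. Qed.
Lemma eps_swap23 a b c d : eps a b d c = - eps a b c d.
Proof. rewrite !epsE /detd /tp; ring. Qed.

Lemma eps_glue (p : {perm 'I_4}) a b c d : odd_perm p ->
  eps (p a) (p b) (p c) (p d) = - eps a b c d.
Proof.
move=> hp; rewrite /eps.
have -> : tup (p a) (p b) (p c) (p d) = (fun i => p (tup a b c d i)).
  by apply/funext => i; rewrite /tup; do 3 case: ifP => _ //.
by rewrite Pmx_perm det_mulmx det_perm hp expr1 mulrN1.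
Qed.

Lemma htt_swap t p0 a b c : htt t p0 b a c = - htt t p0 a b c.
Proof. exact: (ht_swap (Q t a) (Q t b) (Q t c) (vel t p0 a) (vel t p0 b) (vel t p0 c)). Qed.

Definition HF i p0 t a b c d : R :=
  if te K t a b == i then eps a b c d * htt t p0 a b c / edge_len K x i else 0.

Lemma HF_swap i p0 t a b c d : HF i p0 t b a c d = HF i p0 t a b c d.
Proof.
rewrite /HF te_sym eps_swap01 htt_swap; case: ifP => // _; ring.
Qed.

Lemma tet_sum (i : E) (p0 : dxi V) (t : T) :
  \sum_(a : 'I_4) \sum_(b : 'I_4) \sum_(c : 'I_4) \sum_(d : 'I_4)
    (if [&& (a < b)%N, (c < d)%N, [&& a != c, a != d, b != c & b != d] & te K t a b == i]
     then Num.sg (tet_vol K x t) * Theta (G0 t) (Gd t p0) a b c d else 0)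
  = - (1 / 2) * \sum_(a : 'I_4) \sum_(b : 'I_4) \sum_(c : 'I_4) \sum_(d : 'I_4) (if dist4 a b c d then HF i p0 t a b c d else 0).
Proof.
rewrite (_ : \sum_(a : 'I_4) _ = \sum_(a : 'I_4) \sum_(b : 'I_4) \sum_(c : 'I_4) \sum_(d : 'I_4)
    (if condX a b c d then - (HF i p0 t a b c d + HF i p0 t a b d c) else 0)); last first.
  apply: eq_bigr => a _; apply: eq_bigr => b _; apply: eq_bigr => c _; apply: eq_bigr => d _.
  rewrite /condX.
  case hab : (a < b)%N; case hcd : (c < d)%N; rewrite //=.
  case hX : [&& a != c, a != d, b != c & b != d]; rewrite //=.
  have hd : dist4 a b c d.
    have hab' : a != b by apply: contraTneq hab => ->; rewrite ltnn.
    have hcd' : c != d by apply: contraTneq hcd => ->; rewrite ltnn.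
    by case/and4P: hX => ? ? ? ?; rewrite /dist4 hab' hcd'; apply/and4P; split => //; apply/and3P.
  rewrite /HF; case: ifP => hte.
    rewrite part2_slot // /L0 (eqP hte) -/(eps a b c d) eps_swap23; field.
    by apply: lt0r_neq0; exact: edge_len_pos.
  by rewrite addr0 oppr0.
rewrite sum6 sum24E /sum24.
rewrite ?(HF_swap i p0 t (inord 0) (inord 1)) ?(HF_swap i p0 t (inord 0) (inord 2)) ?(HF_swap i p0 t (inord 0) (inord 3)) ?(HF_swap i p0 t (inord 1) (inord 2)) ?(HF_swap i p0 t (inord 1) (inord 3)) ?(HF_swap i p0 t (inord 2) (inord 3)).
field; rewrite ?pnatr_eq0 //.

Qed.

Lemma glue_facts t d :
  [/\ glue_t K (glue_t K t d) (glue_p K t d d) = t /\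
      glue_p K (glue_t K t d) (glue_p K t d d) = ((glue_p K t d)^-1)%g,
      (forall j, j != d -> tv K (glue_t K t d) (glue_p K t d j) = tv K t j),
      (forall j k, j != d -> k != d ->
          te K (glue_t K t d) (glue_p K t d j) (glue_p K t d k) = te K t j k)
    & odd_perm (glue_p K t d)].
Proof. by case: HK => _ _ _ H _; case: (H t d) => h1 _ h3 h4 h5; split. Qed.

Lemma sum5 (F : T -> 'I_4 -> 'I_4 -> 'I_4 -> 'I_4 -> R) :
  \sum_(t : T) \sum_(a : 'I_4) \sum_(b : 'I_4) \sum_(c : 'I_4) \sum_(d : 'I_4) F t a b c d =
  \sum_(z : T * 'I_4 * 'I_4 * 'I_4 * 'I_4) F z.1.1.1.1 z.1.1.1.2 z.1.1.2 z.1.2 z.2.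
Proof. by rewrite !pair_bigA. Qed.

Lemma invol (i : E) (p0 : dxi V) :
  \sum_(t : T) \sum_(a : 'I_4) \sum_(b : 'I_4) \sum_(c : 'I_4) \sum_(d : 'I_4)
    (if dist4 a b c d then HF i p0 t a b c d else 0) = 0.
Proof.
rewrite sum5.
set g := fun z : T * 'I_4 * 'I_4 * 'I_4 * 'I_4 =>
  if dist4 z.1.1.1.2 z.1.1.2 z.1.2 z.2 then HF i p0 z.1.1.1.1 z.1.1.1.2 z.1.1.2 z.1.2 z.2 else 0.
pose phi (z : T * 'I_4 * 'I_4 * 'I_4 * 'I_4) : T * 'I_4 * 'I_4 * 'I_4 * 'I_4 :=
  let p := glue_p K z.1.1.1.1 z.2 in
  (glue_t K z.1.1.1.1 z.2, p z.1.1.1.2, p z.1.1.2, p z.1.2, p z.2).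
have phiK : cancel phi phi.
  case=> [[[[t a] b] c] d]; rewrite /phi /=.
  case: (glue_facts t d) => [[-> ->]] _ _ _.
  by rewrite !permK.
have Hg : forall z, g (phi z) = - g z.
{ case=> [[[[t a] b] c] d]; rewrite /g /phi /=.
  set p := glue_p K t d; set s := glue_t K t d.
  have pinj := @perm_inj _ p.
  have -> : dist4 (p a) (p b) (p c) (p d) = dist4 a b c d.
    by rewrite /dist4 !(inj_eq pinj).
  case hd: (dist4 a b c d); last by rewrite oppr0.
  case: (dist4_pairs hd) => hab hac had [hbc hbd hcd].
  case: (glue_facts t d) => _ htv hte hodd.
  rewrite /HF (hte a b had hbd).
  case: ifP => _; last by rewrite oppr0.
  rewrite eps_glue // /htt /Q /vel (htv a had) (htv b hbd) (htv c hcd).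
  by rewrite !mulNr. }
have Hr : \sum_z g z = \sum_z g (phi z) by apply: reindex_inj; exact: can_inj phiK.
have : \sum_z g z = - \sum_z g z.
  rewrite {1}Hr -sumrN; apply: eq_bigr => z _; exact: Hg.
move=> h; lra.
Qed.

Lemma core2 (i : E) (p0 : dxi V) :
  \sum_(t : T) \sum_(a : 'I_4) \sum_(b : 'I_4) \sum_(c : 'I_4) \sum_(d : 'I_4)
    (if [&& (a < b)%N, (c < d)%N, [&& a != c, a != d, b != c & b != d] & te K t a b == i]
     then Num.sg (tet_vol K x t) * Theta (G0 t) (Gd t p0) a b c d else 0) = 0.
Proof.
under eq_bigr => t _ do rewrite tet_sum.
by rewrite -mulr_sumr invol mulr0.
Qed.

Lemma cX0 : condX (inord 0) (inord 1) (inord 2) (inord 3).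
Proof. by rewrite /condX; ordnorm. Qed.
Lemma cX1 : condX (inord 0) (inord 2) (inord 1) (inord 3).
Proof. by rewrite /condX; ordnorm. Qed.
Lemma cX2 : condX (inord 0) (inord 3) (inord 1) (inord 2).
Proof. by rewrite /condX; ordnorm. Qed.
Lemma cX3 : condX (inord 1) (inord 2) (inord 0) (inord 3).
Proof. by rewrite /condX; ordnorm. Qed.
Lemma cX4 : condX (inord 1) (inord 3) (inord 0) (inord 2).
Proof. by rewrite /condX; ordnorm. Qed.
Lemma cX5 : condX (inord 2) (inord 3) (inord 0) (inord 1).
Proof. by rewrite /condX; ordnorm. Qed.

Lemma Gd_sym t p0 : symm (Gd t p0).
Proof. by move=> p q; rewrite /Gd L0_sym te_sym. Qed.

Lemma condX_dist4 a b c d : condX a b c d -> dist4 a b c d.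
Proof.
case/and3P => hab hcd /and4P[hac had hbc hbd].
have hab' : a != b by apply: contraTneq hab => ->; rewrite ltnn.
have hcd' : c != d by apply: contraTneq hcd => ->; rewrite ltnn.
by rewrite /dist4 hab' hac had hbc hbd hcd'.
Qed.

Lemma Hjsum t p0 : (fun p q => \sum_(j : E) f2 K x j p0 * Hj t j p q) = Gd t p0.
Proof.
apply/funext => p; apply/funext => q; rewrite /Hj /Gd.
rewrite (eq_bigr (fun j => 2 * L0 t p q * ((te K t p q == j)%:R * f2 K x j p0))); last first.
  by move=> j _; ring.
by rewrite -mulr_sumr (@sum_delta' R _ (fun j => f2 K x j p0)).
Qed.

Lemma Theta_lin t p0 a b c d : condX a b c d ->
  \sum_(j : E) Theta (G0 t) (Hj t j) a b c d * f2 K x j p0 = Theta (G0 t) (Gd t p0) a b c d.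
Proof.
move=> hc; have hd := condX_dist4 hc.
rewrite (ThetaR t hd (Gd t p0)) (Rf_dec _ (Gd_sym t p0) hc).
under eq_bigr => j _ do rewrite (ThetaR t hd) (Rf_dec _ (Hj_sym t j) hc).
rewrite -(Hjsum t p0) /sumY !mulr_suml -!big_split /= -sumrN mulr_suml.
by apply: eq_bigr => j _; ring.
Qed.

Lemma part2 i p : \sum_(e : E) f3 K x i e * f2 K x e p = 0.
Proof.
under eq_bigr => j _ do rewrite f3E mulNr !mulr_suml.
under eq_bigr => j _ do under eq_bigr => t _ do rewrite !mulr_suml.
under eq_bigr => j _ do under eq_bigr => t _ do under eq_bigr => a _ do rewrite !mulr_suml.
under eq_bigr => j _ do under eq_bigr => t _ do under eq_bigr => a _ do
   under eq_bigr => b _ do rewrite !mulr_suml.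
under eq_bigr => j _ do under eq_bigr => t _ do under eq_bigr => a _ do
   under eq_bigr => b _ do under eq_bigr => c _ do rewrite !mulr_suml.
rewrite sumrN exchange_big /=.
under eq_bigr => t _ do rewrite exchange_big /=.
under eq_bigr => t _ do under eq_bigr => a _ do rewrite exchange_big /=.
under eq_bigr => t _ do under eq_bigr => a _ do under eq_bigr => b _ do rewrite exchange_big /=.
under eq_bigr => t _ do under eq_bigr => a _ do under eq_bigr => b _ do
   under eq_bigr => c _ do rewrite exchange_big /=.
rewrite -[RHS]oppr0; congr (- _); apply: (etrans _ (core2 i p)).
apply: eq_bigr => t _; apply: eq_bigr => a _; apply: eq_bigr => b _; apply: eq_bigr => c _;
  apply: eq_bigr => d _.
case: ifP => hc; last by rewrite big1 // => j _; rewrite mul0r.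
under eq_bigr => j _ do rewrite -mulrA.
rewrite -mulr_sumr Theta_lin //.
by move: hc; rewrite /condX => /and4P[-> -> -> _].
Qed.

Lemma sum4_eq (F1 F2 : 'I_4 -> 'I_4 -> 'I_4 -> 'I_4 -> R) :
  (forall a b c d, condX a b c d -> F1 a b c d = F2 a b c d) ->
  \sum_(a : 'I_4) \sum_(b : 'I_4) \sum_(c : 'I_4) \sum_(d : 'I_4) (if condX a b c d then F1 a b c d else 0) =
  \sum_(a : 'I_4) \sum_(b : 'I_4) \sum_(c : 'I_4) \sum_(d : 'I_4) (if condX a b c d then F2 a b c d else 0).
Proof.
move=> H; apply: eq_bigr => a _; apply: eq_bigr => b _; apply: eq_bigr => c _; apply: eq_bigr => d _.
by case: ifP => // h; exact: H.
Qed.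

Lemma sum4_scale k (F : 'I_4 -> 'I_4 -> 'I_4 -> 'I_4 -> R) :
  \sum_(a : 'I_4) \sum_(b : 'I_4) \sum_(c : 'I_4) \sum_(d : 'I_4) (if condX a b c d then k * F a b c d else 0) =
  k * \sum_(a : 'I_4) \sum_(b : 'I_4) \sum_(c : 'I_4) \sum_(d : 'I_4) (if condX a b c d then F a b c d else 0).
Proof.
rewrite mulr_sumr; apply: eq_bigr => a _; rewrite mulr_sumr; apply: eq_bigr => b _.
rewrite mulr_sumr; apply: eq_bigr => c _; rewrite mulr_sumr; apply: eq_bigr => d _.
by case: ifP; rewrite ?mulr0.
Qed.

Section Tet3.
Variable t : T.
Let Gs := G0_sym t.

Lemma nz a b c d : condX a b c d -> G0 t a b * Df (G0 t) a b c d != 0.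
Proof.
move=> hc; have hd := condX_dist4 hc.
by rewrite mulf_neq0 // ?(lt0r_neq0 (Df_pos t hd)) // /G0 expf_neq0 // lt0r_neq0 // L0_pos.
Qed.

Lemma Bil_sym (H1 H2 : 'I_4 -> 'I_4 -> R) : symm H1 -> symm H2 ->
  \sum_(a : 'I_4) \sum_(b : 'I_4) \sum_(c : 'I_4) \sum_(d : 'I_4) (if condX a b c d then
     H1 a b * (Rf (G0 t) H2 a b c d / (G0 t a b * Df (G0 t) a b c d)) else 0) =
  \sum_(a : 'I_4) \sum_(b : 'I_4) \sum_(c : 'I_4) \sum_(d : 'I_4) (if condX a b c d then
     H2 a b * (Rf (G0 t) H1 a b c d / (G0 t a b * Df (G0 t) a b c d)) else 0).
Proof.
move=> h1 h2.
have key : forall H, symm H -> forall a b c d, condX a b c d ->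
  Rf (G0 t) H a b c d / (G0 t a b * Df (G0 t) a b c d) = sumY (fun p q => H p q * cc (G0 t) a b c d p q).
  by move=> H Hs a b c d hc; rewrite (Rf_dec _ Hs hc) /sumY /cc; ring.
rewrite (sum4_eq (F2 := fun a b c d => H1 a b * sumY (fun p q => H2 p q * cc (G0 t) a b c d p q)));
  last by move=> a b c d hc; rewrite key.
rewrite (sum4_eq (F1 := fun a b c d => H2 a b * _) (F2 := fun a b c d => H2 a b * sumY (fun p q => H1 p q * cc (G0 t) a b c d p q)));
  last by move=> a b c d hc; rewrite key.
rewrite !sum6 /sumY.
rewrite (cc_sym Gs cX1 cX0 (nz cX1) (nz cX0)) (cc_sym Gs cX2 cX0 (nz cX2) (nz cX0)) (cc_sym Gs cX2 cX1 (nz cX2) (nz cX1)) (cc_sym Gs cX3 cX0 (nz cX3) (nz cX0)) (cc_sym Gs cX3 cX1 (nz cX3) (nz cX1)) (cc_sym Gs cX3 cX2 (nz cX3) (nz cX2)) (cc_sym Gs cX4 cX0 (nz cX4) (nz cX0)) (cc_sym Gs cX4 cX1 (nz cX4) (nz cX1)) (cc_sym Gs cX4 cX2 (nz cX4) (nz cX2)) (cc_sym Gs cX4 cX3 (nz cX4) (nz cX3)) (cc_sym Gs cX5 cX0 (nz cX5) (nz cX0)) (cc_sym Gs cX5 cX1 (nz cX5) (nz cX1)) (cc_sym Gs cX5 cX2 (nz cX5) (nz cX2)) (cc_sym Gs cX5 cX3 (nz cX5) (nz cX3)) (cc_sym Gs cX5 cX4 (nz cX5) (nz cX4)).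
ring.
Qed.

Lemma tet3 j p0 :
  \sum_(a : 'I_4) \sum_(b : 'I_4) \sum_(c : 'I_4) \sum_(d : 'I_4)
    (if condX a b c d then f2 K x (te K t a b) p0 * Theta (G0 t) (Hj t j) a b c d else 0) =
  \sum_(a : 'I_4) \sum_(b : 'I_4) \sum_(c : 'I_4) \sum_(d : 'I_4)
    (if condX a b c d then (te K t a b == j)%:R * Theta (G0 t) (Gd t p0) a b c d else 0).
Proof.
have hd0 : `|d0 t| != 0 by rewrite normr_eq0 d0_neq0.
rewrite (sum4_eq (F2 := fun a b c d => - (2 * `|d0 t|)^-1 * (Gd t p0 a b *
   (Rf (G0 t) (Hj t j) a b c d / (G0 t a b * Df (G0 t) a b c d))))); last first.
  move=> a b c d hc; have hd := condX_dist4 hc.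
  have hL : L0 t a b != 0 by apply: lt0r_neq0; exact: L0_pos.
  have hD : Df (G0 t) a b c d != 0 by apply: lt0r_neq0; exact: Df_pos.
  rewrite (ThetaR t hd) /Gd /G0; field.
  by rewrite hL hd0 hD.
rewrite [RHS](sum4_eq (F2 := fun a b c d => - (2 * `|d0 t|)^-1 * (Hj t j a b *
   (Rf (G0 t) (Gd t p0) a b c d / (G0 t a b * Df (G0 t) a b c d))))); last first.
  move=> a b c d hc; have hd := condX_dist4 hc.
  have hL : L0 t a b != 0 by apply: lt0r_neq0; exact: L0_pos.
  have hD : Df (G0 t) a b c d != 0 by apply: lt0r_neq0; exact: Df_pos.
  rewrite (ThetaR t hd) /Hj /G0; field.
  by rewrite hL hd0 hD.
by rewrite !sum4_scale (Bil_sym (Gd_sym t p0) (Hj_sym t j)).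
Qed.
End Tet3.

Lemma collapse (t : T) (a b c d : 'I_4) (p : dxi V) (Y : R) :
  \sum_(i : E) f2 K x i p * (if [&& (a < b)%N, (c < d)%N, [&& a != c, a != d, b != c & b != d]
                                 & te K t a b == i] then Y else 0) =
  if condX a b c d then f2 K x (te K t a b) p * Y else 0.
Proof.
rewrite /condX.
case: (a < b)%N; case: (c < d)%N; case: [&& a != c, a != d, b != c & b != d] => /=;
  try by rewrite big1 // => i _; rewrite mulr0.
rewrite (bigD1 (te K t a b)) //= eqxx big1 ?addr0 // => i hi.
by rewrite [te K t a b == i]eq_sym (negbTE hi) mulr0.
Qed.

Lemma part3 p j : \sum_(i : E) f4 K x p i * f3 K x i j = 0.
Proof.
under eq_bigr => i _ do rewrite f3E /f4 mulrNN mulr_sumr.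
under eq_bigr => i _ do under eq_bigr => t _ do rewrite mulr_sumr.
under eq_bigr => i _ do under eq_bigr => t _ do under eq_bigr => a _ do rewrite mulr_sumr.
under eq_bigr => i _ do under eq_bigr => t _ do under eq_bigr => a _ do
   under eq_bigr => b _ do rewrite mulr_sumr.
under eq_bigr => i _ do under eq_bigr => t _ do under eq_bigr => a _ do
   under eq_bigr => b _ do under eq_bigr => c _ do rewrite mulr_sumr.
rewrite exchange_big /=.
under eq_bigr => t _ do rewrite exchange_big /=.
under eq_bigr => t _ do under eq_bigr => a _ do rewrite exchange_big /=.
under eq_bigr => t _ do under eq_bigr => a _ do under eq_bigr => b _ do rewrite exchange_big /=.
under eq_bigr => t _ do under eq_bigr => a _ do under eq_bigr => b _ do
   under eq_bigr => c _ do rewrite exchange_big /=.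
under eq_bigr => t _ do under eq_bigr => a _ do under eq_bigr => b _ do
   under eq_bigr => c _ do under eq_bigr => d _ do rewrite collapse.
apply: (etrans _ (core2 j p)).
apply: eq_bigr => t _.
rewrite (sum4_eq (F2 := fun a b c d => Num.sg (tet_vol K x t) *
   (f2 K x (te K t a b) p * Theta (G0 t) (Hj t j) a b c d))); last first.
  by move=> a b c d _; rewrite mulrCA.
rewrite sum4_scale tet3 -sum4_scale.
apply: eq_bigr => a _; apply: eq_bigr => b _; apply: eq_bigr => c _; apply: eq_bigr => d _.
rewrite /condX.
case: (a < b)%N; case: (c < d)%N; case: [&& a != c, a != d, b != c & b != d] => //=.
by case: (te K t a b == j); rewrite /= ?mul1r ?mul0r ?mulr0.
Qed.

End Main.

Unset Implicit Arguments.
Set Strict Implicit.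
Theorem theorem1 (R : realType) (V E T : finType) (K : triangulation V E T)
  (HK : closed_oriented_3manifold K) (x : coords R V)
  (Hgen : forall t : T, tet_vol K x t != 0) :
  [/\ forall (e : E) (b : e3), \sum_(p : dxi V) f2 K x e p * f1 x p b = 0,
      forall (i : E) (p : dxi V), \sum_(e : E) f3 K x i e * f2 K x e p = 0,
      forall (p : dxi V) (j : E), \sum_(i : E) f4 K x p i * f3 K x i j = 0
    & forall (b : e3) (j : E), \sum_(p : dxi V) f5 x b p * f4 K x p j = 0].
Proof.
split.
- exact: (part1 HK Hgen).
- exact: (part2 HK Hgen).
- exact: (part3 HK Hgen).
- exact: (part4 HK Hgen).
Qed.
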